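(* Let $(M,d,X,C)$ be a metric coordinate system, and suppose every closed ball of $(X,d)$ is compact. Then the identity map $(X,d)\to(X,d_C)$ is a homeomorphism; in particular $(X,d_C)$ is locally compact.
   Context: A metric coordinate system is a quadruple $(M,d,X,C)$ where $(M,d)$ is a metric space, $X\subset M$, and $C\subset M$ is such that for all $x,y\in X$ with $x\neq y$ there is $c\in C$ with $d(x,c)\neq d(y,c)$. For $x\in X$, $c\in C$, $x_c:=d(x,c)$, and $d_C(x,y):=\sup_{c\in C}|x_c-y_c|$ is a metric on $X$. Closed balls of $(X,d)$ are sets $\{x\in X:d(x,x_0)\le r\}$ with $x_0\in X$, $r\ge0$. *)

(* Defs.v *)
From Stdlib Require Import Reals List.
From Coquelicot Require Import Coquelicot.
Open Scope R_scope.

Definition is_metric {M : Type} (d : M -> M -> R) : Prop :=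
  (forall x y, 0 <= d x y) /\
  (forall x y, d x y = 0 <-> x = y) /\
  (forall x y, d x y = d y x) /\
  (forall x y z, d x z <= d x y + d y z).

Definition metric_coordinate_system {M : Type} (d : M -> M -> R)
  (X C : M -> Prop) : Prop :=
  is_metric d /\
  forall x y, X x -> X y -> x <> y -> exists c, C c /\ d x c <> d y c.

(* d_C(x,y) = sup_{c in C} |d(x,c) - d(y,c)|  (the sup of the empty set is 0) *)
Definition dC {M : Type} (d : M -> M -> R) (C : M -> Prop) (x y : M) : R :=
  real (Lub_Rbar (fun r => exists c, C c /\ r = Rabs (d x c - d y c))).

Definition mopen {M : Type} (X : M -> Prop) (D : M -> M -> R) (U : M -> Prop) : Prop :=
  forall x, X x -> U x -> exists e, 0 < e /\ forall y, X y -> D x y < e -> U y.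

Definition mcompact {M : Type} (X : M -> Prop) (D : M -> M -> R) (K : M -> Prop) : Prop :=
  (forall x, K x -> X x) /\
  forall (I : Type) (U : I -> M -> Prop),
    (forall i, mopen X D (U i)) ->
    (forall x, K x -> exists i, U i x) ->
    exists l : list I, forall x, K x -> exists i, In i l /\ U i x.

Definition cball {M : Type} (X : M -> Prop) (D : M -> M -> R) (x0 : M) (r : R) : M -> Prop :=
  fun x => X x /\ D x x0 <= r.

Definition mcontinuous {M : Type} (X : M -> Prop) (D1 D2 : M -> M -> R) (f : M -> M) : Prop :=
  forall x, X x -> forall eps, 0 < eps ->
    exists delta, 0 < delta /\ forall y, X y -> D1 x y < delta -> D2 (f x) (f y) < eps.

(* The identity (X,D1) -> (X,D2) is a homeomorphism: it is a bijection of X,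
   continuous, with continuous inverse (the identity (X,D2) -> (X,D1)). *)
Definition id_homeomorphism {M : Type} (X : M -> Prop) (D1 D2 : M -> M -> R) : Prop :=
  mcontinuous X D1 D2 (fun x => x) /\ mcontinuous X D2 D1 (fun x => x).

Definition locally_compact {M : Type} (X : M -> Prop) (D : M -> M -> R) : Prop :=
  forall x, X x -> exists K e, mcompact X D K /\ 0 < e /\
    forall y, X y -> D x y < e -> K y.

(* Main.v *)
Require Import Defs.
From Stdlib Require Import Reals List Lra Classical.
From Coquelicot Require Import Coquelicot.
Open Scope R_scope.

Section Aux.
Context {M : Type} (d : M -> M -> R) (C : M -> Prop).
Hypothesis Hm : is_metric d.

Lemma abs_le_d x y c : Rabs (d x c - d y c) <= d x y.
Proof.
  destruct Hm as (H0 & H1 & Hs & Ht).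
  pose proof (Ht x y c). pose proof (Ht y x c). rewrite (Hs y x) in *.
  apply Rabs_le; lra.
Qed.

Lemma dC_le_d x y : dC d C x y <= d x y.
Proof.
  unfold dC. destruct (Lub_Rbar_correct (fun r => exists c, C c /\ r = Rabs (d x c - d y c))) as [Hub Hl].
  assert (Hb : Rbar_le (Lub_Rbar (fun r => exists c, C c /\ r = Rabs (d x c - d y c))) (d x y)).
  { apply Hl. intros r [c [_ ->]]. simpl. apply abs_le_d. }
  destruct (Lub_Rbar _); simpl in *; try easy.
  destruct Hm as (H0 & _). apply H0.
Qed.

Lemma dC_ge x y c : C c -> Rabs (d x c - d y c) <= dC d C x y.
Proof.
  intro Hc. unfold dC.
  destruct (Lub_Rbar_correct (fun r => exists c, C c /\ r = Rabs (d x c - d y c))) as [Hub Hl].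
  assert (Hb : Rbar_le (Lub_Rbar (fun r => exists c, C c /\ r = Rabs (d x c - d y c))) (d x y)).
  { apply Hl. intros r [c' [_ ->]]. simpl. apply abs_le_d. }
  assert (Ha := Hub _ (ex_intro _ c (conj Hc eq_refl))).
  destruct (Lub_Rbar _); simpl in *; easy.
Qed.
End Aux.

Lemma list_min {I : Type} (f : I -> R) (l : list I) :
  exists m, 0 < m /\ forall i, In i l -> 0 < f i -> m <= f i.
Proof.
  induction l as [|a l [m [Hm H]]].
  - exists 1. split; [lra| intros i []].
  - destruct (Rlt_dec 0 (f a)).
    + exists (Rmin m (f a)). split. apply Rmin_pos; lra.
      intros i [<-|Hi] Hp. apply Rmin_r. eapply Rle_trans. apply Rmin_l. auto.
    + exists m. split; auto. intros i [<-|Hi] Hp. lra. auto.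
Qed.

Lemma cont_back (M : Type) (d : M -> M -> R) (X C : M -> Prop) :
  metric_coordinate_system d X C ->
  (forall x0 r, X x0 -> 0 <= r -> mcompact X d (cball X d x0 r)) ->
  mcontinuous X (dC d C) d (fun x => x).
Proof.
  intros [Hm Hsep] Hcomp x Hx eps Heps.
  destruct Hm as (H0 & H1 & Hs & Ht) eqn:Hme.
  destruct (classic (exists c0, C c0)) as [[c0 Hc0]|Hno].
  2:{ exists 1. split; [lra|]. intros y Hy _.
      destruct (classic (x = y)) as [<-|Hne].
      - replace (d x x) with 0 by (symmetry; apply H1; auto). auto.
      - destruct (Hsep x y Hx Hy Hne) as [c [Hc _]]. exfalso; eauto. }
  set (R0 := 2 * d x c0 + 1).
  assert (HR0 : 0 <= R0) by (pose proof (H0 x c0); unfold R0; lra).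
  destruct (Hcomp x R0 Hx HR0) as [_ Hcov].
  set (U := fun (i : option (M * R)) (z : M) =>
    match i with
    | None => d x z < eps
    | Some (c, a) => C c /\ 0 < a /\ a < Rabs (d x c - d z c)
    end).
  destruct (Hcov _ U) as [l Hl].
  - intros [[c a]|] z Hz Hu; simpl in Hu.
    + destruct Hu as (Hc & Ha & Hlt).
      exists (Rabs (d x c - d z c) - a). split; [lra|].
      intros y Hy Hzy. simpl. split; auto. split; auto.
      pose proof (abs_le_d d Hm z y c) as Hq1.
      pose proof (Rabs_triang (d x c - d y c) (d y c - d z c)) as Hq2.
      replace (d x c - d y c + (d y c - d z c)) with (d x c - d z c) in Hq2 by ring.
      assert (Rabs (d y c - d z c) = Rabs (d z c - d y c)).
      { rewrite <- Rabs_Ropp. f_equal. ring. }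
      lra.
    + exists (eps - d x z). split; [lra|]. intros y Hy Hzy. simpl.
      pose proof (Ht x z y). lra.
  - intros z [Hz Hzb].
    destruct (Rlt_dec (d x z) eps) as [Hlt|Hge].
    + exists None. exact Hlt.
    + destruct (classic (x = z)) as [<-|Hne].
      { replace (d x x) with 0 in Hge by (symmetry; apply H1; auto). lra. }
      destruct (Hsep x z Hx Hz Hne) as [c [Hc Hdc]].
      exists (Some (c, Rabs (d x c - d z c) / 2)). simpl.
      assert (0 < Rabs (d x c - d z c)) by (apply Rabs_pos_lt; lra).
      repeat split; auto; lra.
  - destruct (list_min (fun i => match i with None => 0 | Some (_, a) => a end) l)
      as [m [Hm0 Hmin]].
    exists (Rmin m 1). split. apply Rmin_pos; lra.
    intros y Hy Hdy.
    destruct (Rlt_dec (d x y) eps) as [Hlt|Hge]; [exact Hlt|exfalso].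
    destruct (Rle_dec (d x y) R0) as [Hle|Hgt].
    + assert (Hle' : d y x <= R0) by (rewrite Hs; exact Hle).
      destruct (Hl y (conj Hy Hle')) as [[[c a]|] [Hin Hu]];
        simpl in Hu.
      * destruct Hu as (Hc & Ha & Hlt).
        pose proof (Hmin _ Hin Ha). simpl in H.
        pose proof (dC_ge d C Hm x y c Hc). pose proof (Rmin_l m 1). lra.
      * lra.
    + pose proof (dC_ge d C Hm x y c0 Hc0).
      pose proof (Ht x c0 y) as Hq. rewrite (Hs c0 y) in Hq.
      pose proof (Rle_abs (d y c0 - d x c0)).
      assert (Rabs (d y c0 - d x c0) = Rabs (d x c0 - d y c0)).
      { rewrite <- Rabs_Ropp. f_equal. ring. }
      pose proof (Rmin_r m 1). unfold R0 in Hgt. lra.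
Qed.

Theorem theorem7p1 (M : Type) (d : M -> M -> R) (X C : M -> Prop) :
  metric_coordinate_system d X C ->
  (forall x0 r, X x0 -> 0 <= r -> mcompact X d (cball X d x0 r)) ->
  id_homeomorphism X d (dC d C) /\ locally_compact X (dC d C).
Proof.
  intros Hmcs Hcomp.
  pose proof (cont_back M d X C Hmcs Hcomp) as Hback.
  destruct Hmcs as [Hm Hsep].
  split; [split|].
  - intros x Hx eps Heps. exists eps. split; auto. intros y Hy Hd.
    pose proof (dC_le_d d C Hm x y). lra.
  - exact Hback.
  - intros x Hx. destruct (Hback x Hx 1 ltac:(lra)) as [e [He Hy]].
    exists (cball X d x 1), e. split; [|split; auto].
    + destruct (Hcomp x 1 Hx ltac:(lra)) as [Hsub Hcov]. split; auto.
      intros I U HU Hc. apply (Hcov I U); auto.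
      intros i z Hz Hu. destruct (HU i z Hz Hu) as [r [Hr HH]].
      exists r. split; auto. intros y Hy' Hzy. apply HH; auto.
      pose proof (dC_le_d d C Hm z y). lra.
    + intros y Hy' Hd. split; auto. destruct Hm as (_ & _ & Hs & _).
      rewrite Hs. left. apply Hy; auto.
Qed.
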